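(* Let $\alpha\in[0,1]$ be irrational, $n\geq 2$, and $\alpha_n=\frac{p_n}{q_n}$ the $n$-th rational approximant to $\alpha$. Let $k_0\in\mathbb{Z}$ with $q_{n-1}\ge|k_0|$ and set $\theta:=k_0\alpha\bmod 1$. Then for all $-q_n+1\le k\le q_n-2$: (a) if $k_0>0$ and $n$ is even, $v_{\alpha_n,\theta}(k)=v_{\alpha,\theta}(k)$; (b) if $k_0>0$ and $n$ is odd, $v_{\alpha_n,\theta}(k)=\widetilde v_{\alpha,\theta}(k)$; (c) if $k_0<0$ and $n$ is even, $v_{\alpha_n,\theta}(k)=\widetilde v_{\alpha,\theta}(k)$; (d) if $k_0<0$ and $n$ is odd, $v_{\alpha_n,\theta}(k)=v_{\alpha,\theta}(k)$.
   Context: For $\beta\in[0,1]$, $\theta\in[0,1)$: $v_{\beta,\theta}(k)=\chi_{[1-\beta,1)}(k\beta+\theta\bmod 1)$ and $\widetilde v_{\beta,\theta}(k)=\chi_{(1-\beta,1]\cup\{0\}}(k\beta+\theta\bmod 1)$. Rational approximants: for $\alpha=[a_1,a_2,\dots]$, $p_{-1}=1,p_0=0,p_n=a_np_{n-1}+p_{n-2}$, $q_{-1}=0,q_0=1,q_n=a_nq_{n-1}+q_{n-2}$, $\alpha_n=p_n/q_n$. *)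

(* Defs.v *)
From Stdlib Require Import Reals ZArith.
Open Scope R_scope.

Definition frac (x : R) : R := x - IZR (Int_part x).

Fixpoint gauss (alpha : R) (m : nat) : R :=
  match m with
  | O => alpha
  | S m' => frac (/ gauss alpha m')
  end.

(* continued fraction digit a_m (m >= 1): alpha = [a_1, a_2, ...]
   = 1/(a_1 + 1/(a_2 + ...)) *)
Definition cf_a (alpha : R) (m : nat) : Z := Int_part (/ gauss alpha (m - 1)).

(* (p_{m-1}, p_m, q_{m-1}, q_m) *)
Fixpoint pq (alpha : R) (m : nat) : Z * Z * Z * Z :=
  match m with
  | O => (1%Z, 0%Z, 0%Z, 1%Z)
  | S m' =>
      let '(pp, p, qq, q) := pq alpha m' in
      let a := cf_a alpha (S m') in
      (p, (a * p + pp)%Z, q, (a * q + qq)%Z)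
  end.

Definition cf_p (alpha : R) (m : nat) : Z := let '(_, p, _, _) := pq alpha m in p.
Definition cf_q (alpha : R) (m : nat) : Z := let '(_, _, _, q) := pq alpha m in q.

Definition approx (alpha : R) (m : nat) : R := IZR (cf_p alpha m) / IZR (cf_q alpha m).

Definition irrational (x : R) : Prop :=
  ~ exists (a b : Z), b <> 0%Z /\ x = IZR a / IZR b.

Definition v (beta theta : R) (k : Z) : R :=
  let x := frac (IZR k * beta + theta) in
  if Rle_dec (1 - beta) x then (if Rlt_dec x 1 then 1 else 0) else 0.

Definition vt (beta theta : R) (k : Z) : R :=
  let x := frac (IZR k * beta + theta) in
  if Rlt_dec (1 - beta) x then (if Rle_dec x 1 then 1 else 0)
  else if Req_EM_T x 0 then 1 else 0.

(* Main.v *)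
Require Import Defs.
From Stdlib Require Import Reals ZArith Lra Lia Psatz.
Open Scope R_scope.

Lemma fl_char (r : R) (m : Z) : IZR m <= r < IZR m + 1 -> Int_part r = m.
Proof. intros H. symmetry. apply Int_part_spec. lra. Qed.

Lemma fl_bounds (r : R) : IZR (Int_part r) <= r < IZR (Int_part r) + 1.
Proof. destruct (base_Int_part r). lra. Qed.

Definition Cl (r : R) : Z := (- Int_part (- r))%Z.

Lemma cl_char (r : R) (m : Z) : IZR m - 1 < r <= IZR m -> Cl r = m.
Proof. intros H. unfold Cl. rewrite (fl_char (-r) (-m)). lia.
  rewrite opp_IZR. lra. Qed.

Lemma IZR_lt_succ (a b : Z) : IZR a < IZR b + 1 -> (a <= b)%Z.
Proof. intros H. rewrite <- plus_IZR in H. apply lt_IZR in H. lia. Qed.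

Lemma v_floor (beta theta : R) (k : Z) : 0 <= beta <= 1 ->
  v beta theta k = IZR (Int_part (IZR k * beta + theta + beta) - Int_part (IZR k * beta + theta)).
Proof.
  intros Hb. unfold v, frac. set (X := IZR k * beta + theta).
  destruct (fl_bounds X) as [H1 H2]. set (m := Int_part X) in *.
  destruct (Rle_dec (1 - beta) (X - IZR m)).
  - destruct (Rlt_dec (X - IZR m) 1); [|lra].
    rewrite (fl_char (X + beta) (m + 1)). replace (m + 1 - m)%Z with 1%Z by lia. reflexivity.
    rewrite plus_IZR. lra.
  - rewrite (fl_char (X + beta) m). replace (m - m)%Z with 0%Z by lia. reflexivity. lra.
Qed.

Lemma vt_ceil (beta theta : R) (k : Z) : 0 < beta < 1 ->
  vt beta theta k = IZR (Cl (IZR k * beta + theta + beta) - Cl (IZR k * beta + theta)).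
Proof.
  intros Hb. unfold vt, frac. set (X := IZR k * beta + theta).
  destruct (fl_bounds X) as [H1 H2]. set (m := Int_part X) in *.
  destruct (Rlt_dec (1 - beta) (X - IZR m)).
  - destruct (Rle_dec (X - IZR m) 1); [|lra].
    rewrite (cl_char (X + beta) (m + 2)). rewrite (cl_char X (m + 1)).
    replace (m + 2 - (m + 1))%Z with 1%Z by lia. reflexivity.
    rewrite plus_IZR. lra. rewrite plus_IZR. lra.
  - destruct (Req_EM_T (X - IZR m) 0).
    + rewrite (cl_char (X + beta) (m + 1)). rewrite (cl_char X m).
      replace (m + 1 - m)%Z with 1%Z by lia. reflexivity. lra. rewrite plus_IZR. lra.
    + rewrite (cl_char (X + beta) (m + 1)). rewrite (cl_char X (m + 1)).
      replace (m + 1 - (m + 1))%Z with 0%Z by lia. reflexivity.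
      rewrite plus_IZR. lra. rewrite plus_IZR. lra.
Qed.

Lemma fl_stable (x y d : R) : d > 0 -> (forall m : Z, Rabs (x - IZR m) >= d) ->
  Rabs (y - x) < d -> Int_part y = Int_part x.
Proof.
  intros Hd Hm Hyx. destruct (fl_bounds x) as [H1 H2]. set (m := Int_part x) in *.
  pose proof (Hm m) as A. pose proof (Hm (m+1)%Z) as B. rewrite plus_IZR in B.
  apply fl_char. unfold Rabs in *.
  destruct (Rcase_abs (x - IZR m)); destruct (Rcase_abs (x - (IZR m + 1)));
  destruct (Rcase_abs (y - x)); lra.
Qed.

Lemma cl_nonint (x d : R) : d > 0 -> (forall m : Z, Rabs (x - IZR m) >= d) ->
  Cl x = (Int_part x + 1)%Z.
Proof.
  intros Hd Hm. destruct (fl_bounds x) as [H1 H2]. set (m := Int_part x) in *.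
  pose proof (Hm m) as A. apply cl_char. rewrite plus_IZR. unfold Rabs in A.
  destruct (Rcase_abs (x - IZR m)); lra.
Qed.
Lemma pq_S_eq alpha m pp p qq q : pq alpha m = (pp, p, qq, q) ->
  pq alpha (S m) = (p, (cf_a alpha (S m) * p + pp)%Z, q, (cf_a alpha (S m) * q + qq)%Z).
Proof. intros H. cbn [pq]. rewrite H. reflexivity. Qed.

Lemma cf_a_S alpha m : cf_a alpha (S m) = Int_part (/ gauss alpha m).
Proof. unfold cf_a. replace (S m - 1)%nat with m by lia. reflexivity. Qed.

Lemma a_ge1 t : 0 < t < 1 -> (1 <= Int_part (/ t))%Z.
Proof. intros H. destruct (fl_bounds (/ t)) as [H1 H2].
  assert (/ t > 1). { rewrite <- Rinv_1. apply Rinv_lt_contravar; lra. }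
  assert (0 < IZR (Int_part (/t))) by lra. apply lt_IZR in H3. lia. Qed.

Definition Inv alpha m pp p qq q : Prop :=
 (1 <= q)%Z /\ (0 <= qq <= q)%Z /\
 (p*qq - pp*q = if Nat.even m then -1 else 1)%Z /\
 IZR q*alpha - IZR p = - gauss alpha m * (IZR qq * alpha - IZR pp) /\
 0 < gauss alpha m < 1 /\
 (if Nat.even m then IZR q*alpha - IZR p > 0 /\ IZR qq*alpha - IZR pp < 0
  else IZR q*alpha - IZR p < 0 /\ IZR qq*alpha - IZR pp > 0) /\
 Rabs (IZR qq*alpha - IZR pp) <= 1.

Lemma irr_ne alpha p q : irrational alpha -> (1 <= q)%Z -> IZR q * alpha - IZR p <> 0.
Proof. intros Hi Hq E. apply Hi. exists p, q. split. lia.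
  assert (IZR q <> 0) by (apply not_0_IZR; lia). field_simplify_eq; auto. lra. Qed.

Lemma inv_all alpha : 0 <= alpha <= 1 -> irrational alpha ->
  forall m pp p qq q, pq alpha m = (pp, p, qq, q) -> Inv alpha m pp p qq q.
Proof.
  intros Ha Hi. induction m as [|m IH]; intros pp p qq q E.
  - cbn in E. inversion E; subst. unfold Inv. cbn.
    assert (alpha <> 0). { intro. apply Hi. exists 0%Z, 1%Z. split. lia. subst. cbn. field. }
    assert (alpha <> 1). { intro. apply Hi. exists 1%Z, 1%Z. split. lia. subst. cbn. field. }
    repeat split; try lia; try lra. unfold Rabs; destruct Rcase_abs; lra.
  - destruct (pq alpha m) as [[[pp0 p0] qq0] q0] eqn:E0.
    pose proof (pq_S_eq _ _ _ _ _ _ E0) as E1. rewrite E1 in E. injection E as <- <- <- <-.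
    destruct (IH _ _ _ _ eq_refl) as (Hq & Hqq & Hdet & Hd & Ht & Hs & Hab).
    rewrite cf_a_S. set (t := gauss alpha m) in *.
    set (a := Int_part (/ t)).
    assert (Ha1 : (1 <= a)%Z) by (apply a_ge1; auto).
    assert (Ht' : gauss alpha (S m) = / t - IZR a) by reflexivity.
    destruct (fl_bounds (/ t)) as [F1 F2]. fold a in F1, F2.
    set (d := IZR q0 * alpha - IZR p0) in *. set (d' := IZR qq0 * alpha - IZR pp0) in *.
    assert (Hdn : IZR (a * q0 + qq0) * alpha - IZR (a * p0 + pp0) = IZR a * d + d').
    { unfold d, d'. rewrite !plus_IZR, !mult_IZR. ring. }
    assert (Hdn2 : IZR (a * q0 + qq0) * alpha - IZR (a * p0 + pp0) = - gauss alpha (S m) * d).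
    { rewrite Hdn, Ht'. rewrite Hd. field. lra. }
    assert (Hq1 : (1 <= a * q0 + qq0)%Z) by nia.
    assert (Htp : 0 < gauss alpha (S m) < 1).
    { rewrite Ht'. split; [|lra]. destruct (Req_dec (/ t - IZR a) 0) as [Z|Z].
      - exfalso. apply (irr_ne alpha (a * p0 + pp0) (a * q0 + qq0) Hi Hq1).
        rewrite Hdn2, Ht', Z. ring.
      - lra. }
    unfold Inv. rewrite Nat.even_succ, <- Nat.negb_even.
    split; [lia|]. split; [nia|]. split.
    { destruct (Nat.even m); cbn; nia. }
    split. { rewrite Hdn2. fold d. reflexivity. }
    split. { exact Htp. }
    split.
    { rewrite Hdn2. fold d. destruct (Nat.even m); cbn [negb]; destruct Hs as [Hs1 Hs2]; split; nra. }
    fold d. rewrite Hd, Rabs_mult, Rabs_Ropp, Rabs_right by lra. nra.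
Qed.
Lemma best (alpha : R) (p q p1 q1 i m : Z) : (1 <= q)%Z ->
  ((p1 * q - p * q1) * (p1 * q - p * q1) = 1)%Z ->
  (IZR q * alpha - IZR p) * (IZR q1 * alpha - IZR p1) < 0 ->
  i <> 0%Z -> (Z.abs i < q1)%Z ->
  Rabs (IZR i * alpha - IZR m) >= Rabs (IZR q * alpha - IZR p).
Proof.
  intros Hq HD Hs Hi Hi1.
  set (D := (p1 * q - p * q1)%Z) in *.
  set (u := (D * (p1 * i - q1 * m))%Z). set (w := (D * (q * m - p * i))%Z).
  assert (Ei : (u * q + w * q1 = i)%Z).
  { transitivity (D * D * i)%Z. unfold u, w, D; ring. rewrite HD; ring. }
  assert (Em : (u * p + w * p1 = m)%Z).
  { transitivity (D * D * m)%Z. unfold u, w, D; ring. rewrite HD; ring. }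
  set (d := IZR q * alpha - IZR p) in *. set (d1 := IZR q1 * alpha - IZR p1) in *.
  assert (E : IZR i * alpha - IZR m = IZR u * d + IZR w * d1).
  { rewrite <- Ei, <- Em. unfold d, d1. rewrite !plus_IZR, !mult_IZR. ring. }
  rewrite E. clearbody u w. clear E.
  destruct (Z.eq_dec w 0) as [W|W].
  - subst w. assert (u <> 0%Z) by (intro; subst; lia).
    rewrite Rmult_0_l, Rplus_0_r, Rabs_mult.
    assert (1 <= Rabs (IZR u)). { rewrite Rabs_Zabs. apply IZR_le. lia. }
    pose proof (Rabs_pos d). apply Rle_ge. rewrite <- (Rmult_1_l (Rabs d)) at 1. apply Rmult_le_compat_r; lra.
  - assert (Hq1 : (0 < q1)%Z) by lia. destruct (Z.eq_dec u 0) as [U|U]. { subst u. destruct (Z_lt_le_dec w 0); nia. }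
    assert (Huw : (u < 0 < w \/ w < 0 < u)%Z). { destruct (Z_lt_le_dec u 0), (Z_lt_le_dec w 0); try lia; nia. }
    assert (Hdd : (d > 0 /\ d1 < 0) \/ (d < 0 /\ d1 > 0)).
    { destruct (Rlt_le_dec 0 d); [left|right]; split; try nra.
      destruct (Req_dec d 0); [subst; rewrite H in Hs; lra|lra]. }
    destruct Huw as [[H1 H2]|[H1 H2]].
    + assert (IZR u <= -1) by (apply IZR_le; lia). assert (1 <= IZR w) by (apply IZR_le; lia).
      destruct Hdd as [[]|[]].
      * rewrite (Rabs_left1 (IZR u * d + IZR w * d1)) by nra. rewrite Rabs_right by lra. nra.
      * rewrite (Rabs_right (IZR u * d + IZR w * d1)) by nra. rewrite Rabs_left by lra. nra.
    + assert (IZR w <= -1) by (apply IZR_le; lia). assert (1 <= IZR u) by (apply IZR_le; lia).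
      destruct Hdd as [[]|[]].
      * rewrite (Rabs_right (IZR u * d + IZR w * d1)) by nra. rewrite Rabs_right by lra. nra.
      * rewrite (Rabs_left1 (IZR u * d + IZR w * d1)) by nra. rewrite Rabs_left by lra. nra.
Qed.

Lemma alpha_open alpha : 0 <= alpha <= 1 -> irrational alpha -> 0 < alpha < 1.
Proof. intros Ha Hi.
  assert (alpha <> 0). { intro. apply Hi. exists 0%Z, 1%Z. split. lia. subst. cbn. field. }
  assert (alpha <> 1). { intro. apply Hi. exists 1%Z, 1%Z. split. lia. subst. cbn. field. }
  lra. Qed.

Theorem lemma4p9 (alpha : R) (n : nat) (k0 : Z) :
  0 <= alpha <= 1 -> irrational alpha -> (2 <= n)%nat ->
  (Z.abs k0 <= cf_q alpha (n - 1))%Z ->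
  let theta := frac (IZR k0 * alpha) in
  forall k : Z, (- cf_q alpha n + 1 <= k <= cf_q alpha n - 2)%Z ->
    ((0 < k0)%Z -> Nat.even n = true -> v (approx alpha n) theta k = v alpha theta k) /\
    ((0 < k0)%Z -> Nat.even n = false -> v (approx alpha n) theta k = vt alpha theta k) /\
    ((k0 < 0)%Z -> Nat.even n = true -> v (approx alpha n) theta k = vt alpha theta k) /\
    ((k0 < 0)%Z -> Nat.even n = false -> v (approx alpha n) theta k = v alpha theta k).
Proof.
  intros Ha Hi Hn Hk0 theta k Hk.
  destruct n as [|[|m]]; [lia|lia|].
  pose proof (alpha_open _ Ha Hi) as Ha'.
  destruct (pq alpha (S m)) as [[[pp0 p0] qq0] q0] eqn:E0.
  pose proof (pq_S_eq _ _ _ _ _ _ E0) as E1.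
  set (a := cf_a alpha (S (S m))) in E1.
  set (p := (a * p0 + pp0)%Z) in E1. set (q := (a * q0 + qq0)%Z) in E1.
  pose proof (pq_S_eq _ _ _ _ _ _ E1) as E2.
  set (a' := cf_a alpha (S (S (S m)))) in E2.
  set (p1 := (a' * p + p0)%Z) in E2. set (q1 := (a' * q + q0)%Z) in E2.
  assert (Cq0 : cf_q alpha (S (S m) - 1) = q0).
  { unfold cf_q. replace (S (S m) - 1)%nat with (S m) by lia. rewrite E0. reflexivity. }
  assert (Cq : cf_q alpha (S (S m)) = q). { unfold cf_q. rewrite E1. reflexivity. }
  assert (Cp : cf_p alpha (S (S m)) = p). { unfold cf_p. rewrite E1. reflexivity. }
  rewrite Cq0 in Hk0. rewrite Cq in Hk. unfold approx. rewrite Cq, Cp.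
  destruct (inv_all alpha Ha Hi _ _ _ _ _ E1) as (Hq & Hqq & _ & Hd & Ht & Hs & Hab).
  destruct (inv_all alpha Ha Hi _ _ _ _ _ E2) as (_ & _ & Hdet & _ & _ & Hs2 & _).
  assert (Ha1 : (1 <= a')%Z). { unfold a'. rewrite cf_a_S. apply a_ge1. exact Ht. }
  assert (Hq1 : (q + q0 <= q1)%Z) by (unfold q1; nia).
  clearbody p q p1 q1.
  clearbody a'. clear E0 E1 E2 a.
  set (t := gauss alpha (S (S m))) in *.
  set (d := IZR q * alpha - IZR p) in *. set (d' := IZR q0 * alpha - IZR p0) in *.
  assert (Hdd1 : d * (IZR q1 * alpha - IZR p1) < 0).
  { destruct (Nat.even (S (S (S m)))); destruct Hs2; nra. }
  assert (Hdne : d <> 0). { destruct (Nat.even (S (S m))); destruct Hs; lra. }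
  assert (Hdlt : Rabs d < 1).
  { rewrite Hd, Rabs_mult, Rabs_Ropp, (Rabs_right t) by lra. pose proof (Rabs_pos d'). nra. }
  assert (Hdpos : Rabs d > 0) by (apply Rabs_pos_lt; auto).
  assert (HqR : IZR q >= 1) by (apply Rle_ge, IZR_le; lia).
  assert (Hpq : (0 <= p <= q)%Z).
  { assert (-1 < d < 1) by (apply Rabs_def2 in Hdlt; lra). unfold d in H.
    split.
    - assert (IZR (-1) < IZR p) by nra. apply lt_IZR in H0. lia.
    - apply IZR_lt_succ. nra. }
  assert (Hbeta : 0 <= IZR p / IZR q <= 1).
  { assert (0 <= IZR p) by (apply IZR_le; lia). assert (IZR p <= IZR q) by (apply IZR_le; lia).
    split. apply Rmult_le_pos; [lra | left; apply Rinv_0_lt_compat; lra].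
    apply (Rmult_le_reg_r (IZR q)). lra. field_simplify; lra. }
  set (m0 := Int_part (IZR k0 * alpha)).
  assert (Eth : theta = IZR k0 * alpha - IZR m0) by reflexivity.
  clearbody theta.
  set (Y := fun j : Z => IZR j * (IZR p / IZR q) + theta).
  set (X := fun j : Z => IZR j * alpha + theta).
  assert (Hv1 : v (IZR p / IZR q) theta k = IZR (Int_part (Y (k+1)%Z) - Int_part (Y k))).
  { rewrite v_floor by exact Hbeta. unfold Y. rewrite plus_IZR.
    replace ((IZR k + 1) * (IZR p / IZR q) + theta) with (IZR k * (IZR p / IZR q) + theta + IZR p / IZR q) by ring.
    reflexivity. }
  assert (Hv2 : v alpha theta k = IZR (Int_part (X (k+1)%Z) - Int_part (X k))).
  { rewrite v_floor by lra. unfold X. rewrite plus_IZR.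
    replace ((IZR k + 1) * alpha + theta) with (IZR k * alpha + theta + alpha) by ring.
    reflexivity. }
  assert (Hv3 : vt alpha theta k = IZR (Cl (X (k+1)%Z) - Cl (X k))).
  { rewrite vt_ceil by lra. unfold X. rewrite plus_IZR.
    replace ((IZR k + 1) * alpha + theta) with (IZR k * alpha + theta + alpha) by ring.
    reflexivity. }
  assert (KEY : forall j, (- q + 1 <= j <= q - 1)%Z ->
    (0 < IZR k0 * d -> Int_part (Y j) = Int_part (X j)) /\
    (IZR k0 * d < 0 -> Int_part (Y j) = (Cl (X j) - 1)%Z)).
  { intros j Hj.
    destruct (Z.eq_dec (j + k0) 0) as [J|J].
    - assert (Xj : X j = - IZR m0).
      { unfold X. rewrite Eth. replace j with (- k0)%Z by lia. rewrite opp_IZR. ring. }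
      assert (Yj : Y j = IZR k0 * d / IZR q - IZR m0).
      { unfold Y, d. rewrite Eth. replace j with (- k0)%Z by lia. rewrite opp_IZR. field. lra. }
      assert (Hb : Rabs (IZR k0 * d) < IZR q).
      { rewrite Rabs_mult, Rabs_Zabs. assert (IZR (Z.abs k0) <= IZR q) by (apply IZR_le; lia).
        pose proof (Rabs_pos d). assert (0 <= IZR (Z.abs k0)) by (apply IZR_le; lia). nra. }
      apply Rabs_def2 in Hb. destruct Hb as [Hb1 Hb2].
      assert (Cx : Cl (X j) = (- m0)%Z). { apply cl_char. rewrite Xj, opp_IZR. lra. }
      split; intros Hsg.
      + rewrite (fl_char (X j) (- m0)) by (rewrite Xj, opp_IZR; lra).
        apply fl_char. rewrite Yj, opp_IZR.
        assert (0 < IZR k0 * d / IZR q < 1).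
        { split. apply Rdiv_lt_0_compat; lra. apply (Rmult_lt_reg_r (IZR q)). lra. field_simplify; lra. }
        lra.
      + rewrite Cx. apply fl_char. rewrite Yj, minus_IZR, opp_IZR.
        assert (-1 < IZR k0 * d / IZR q < 0).
        { split. apply (Rmult_lt_reg_r (IZR q)). lra. field_simplify; lra.
          apply (Rmult_lt_reg_r (IZR q)). lra. field_simplify; lra. }
        lra.
    - assert (Hbest : forall mm : Z, Rabs (X j - IZR mm) >= Rabs d).
      { intros mm. unfold d.
        replace (X j - IZR mm) with (IZR (j + k0) * alpha - IZR (mm + m0)).
        apply (best alpha p q p1 q1); auto.
        + rewrite Hdet. destruct (Nat.even (S (S (S m)))); reflexivity.
        + lia.
        + unfold X. rewrite Eth, !plus_IZR. ring. }
      assert (Hyx : Rabs (Y j - X j) < Rabs d).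
      { replace (Y j - X j) with (- (IZR j * d) / IZR q).
        2:{ unfold Y, X, d. field. lra. }
        unfold Rdiv. rewrite Rabs_mult, Rabs_Ropp, Rabs_mult, Rabs_Zabs, (Rabs_right (/ IZR q)).
        2:{ left. apply Rinv_0_lt_compat. lra. }
        assert (IZR (Z.abs j) <= IZR q - 1) by (rewrite <- minus_IZR; apply IZR_le; lia).
        assert (0 <= IZR (Z.abs j)) by (apply IZR_le; lia).
        apply (Rmult_lt_reg_r (IZR q)). lra.
        replace (IZR (Z.abs j) * Rabs d * / IZR q * IZR q) with (IZR (Z.abs j) * Rabs d) by (field; lra).
        nra. }
      pose proof (fl_stable (X j) (Y j) (Rabs d) Hdpos Hbest Hyx) as F.
      pose proof (cl_nonint (X j) (Rabs d) Hdpos Hbest) as G.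
      split; intros; lia. }
  destruct (KEY k ltac:(lia)) as [K1 K2]. destruct (KEY (k+1)%Z ltac:(lia)) as [K3 K4].
  assert (Pos : 0 < IZR k0 * d -> v (IZR p / IZR q) theta k = v alpha theta k).
  { intros H. rewrite Hv1, Hv2, K1, K3 by exact H. reflexivity. }
  assert (Neg : IZR k0 * d < 0 -> v (IZR p / IZR q) theta k = vt alpha theta k).
  { intros H. rewrite Hv1, Hv3, K2, K4 by exact H. f_equal. lia. }
  assert (Hk0p : (0 < k0)%Z -> 0 < IZR k0) by (intros; apply IZR_lt; lia).
  assert (Hk0n : (k0 < 0)%Z -> IZR k0 < 0) by (intros; apply IZR_lt; lia).
  repeat split; intros H1 H2; rewrite H2 in Hs; destruct Hs as [Hs Hs'];
    [apply Pos | apply Neg | apply Neg | apply Pos];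
    first [ specialize (Hk0p H1) | specialize (Hk0n H1) ]; nra.
Qed.
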